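(* Let $V$ be a complex vector space with inner products $\langle\cdot,\cdot\rangle_1,\langle\cdot,\cdot\rangle_2$ and induced norms $\|\cdot\|_1,\|\cdot\|_2$. Suppose at least one of the following holds: (1) $\langle\cdot,\cdot\rangle_2=c\langle\cdot,\cdot\rangle_1$ for some $c>0$; (2) $\|\cdot\|_2=c\|\cdot\|_1$ for some $c>0$; (3) the two inner products give the same angle between every pair of nonzero vectors; (4) for all nonzero $x,y$, $\mathrm{Re}\langle x,y\rangle_1=0\iff\mathrm{Re}\langle x,y\rangle_2=0$; (5) for all $x,y$, $\langle x,y\rangle_1=0\iff\langle x,y\rangle_2=0$; (6) for some $\theta_0\in(0,\pi)$, for all nonzero $x,y$ the angle between $x,y$ with respect to $\langle\cdot,\cdot\rangle_1$ is $\theta_0$ iff it is $\theta_0$ with respect to $\langle\cdot,\cdot\rangle_2$. If moreover there is a nonzero $x\in V$ with $\|x\|_1=\|x\|_2$, then $\langle\cdot,\cdot\rangle_1=\langle\cdot,\cdot\rangle_2$.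
   Context: Inner products are linear in the first argument and conjugate-linear in the second, with norm $\|x\|=\sqrt{\langle x,x\rangle}$. The angle between nonzero vectors $x,y$ of a complex inner product space is the unique $\theta\in[0,\pi]$ with $\cos\theta=\mathrm{Re}\,\langle x,y\rangle/(\|x\|\|y\|)$. *)

(* Defs.v *)
From HB Require Import structures.
From mathcomp Require Import all_boot all_order all_algebra.
From mathcomp Require Import complex.
From mathcomp Require Import reals trigo.
Set Implicit Arguments. Unset Strict Implicit. Unset Printing Implicit Defensive.
Import Order.TTheory GRing.Theory Num.Theory.
Local Open Scope ring_scope.

Definition is_inner_product (R : realType) (V : lmodType R[i]) (ip : V -> V -> R[i]) : Prop :=
  [/\ (forall (a : R[i]) (x y z : V), ip (a *: x + y) z = a * ip x z + ip y z),
      (forall x y : V, ip y x = conjc (ip x y)) &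
      (forall x : V, x != 0 -> 0 < ip x x)].

Definition ipnorm (R : realType) (V : lmodType R[i]) (ip : V -> V -> R[i]) (x : V) : R :=
  Num.sqrt (complex.Re (ip x x)).

Definition ipangle (R : realType) (V : lmodType R[i]) (ip : V -> V -> R[i]) (x y : V) : R :=
  acos (complex.Re (ip x y) / (ipnorm ip x * ipnorm ip y)).

(* Main.v *)
Require Import Defs.
From HB Require Import structures.
From mathcomp Require Import all_boot all_order all_algebra.
From mathcomp Require Import complex.
From mathcomp Require Import reals trigo.
From mathcomp Require Import ring lra.
Import Order.TTheory GRing.Theory Num.Theory.
Local Open Scope ring_scope.
Set Implicit Arguments. Unset Strict Implicit.

Local Notation Re := complex.Re.
Section Basics.
Variables (R : realType) (V : lmodType R[i]) (ip : V -> V -> R[i]).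
Hypothesis h : is_inner_product ip.

Lemma ip0l z : ip 0 z = 0.
Proof.
case: h => hl _ _.
have := hl 1 0 0 z; rewrite scaler0 addr0 mul1r.
by move/(congr1 (fun t => t - ip 0 z)); rewrite addrK subrr => ->.
Qed.

Lemma ipDl x y z : ip (x + y) z = ip x z + ip y z.
Proof. by case: h => hl _ _; rewrite -[x]scale1r hl mul1r scale1r. Qed.

Lemma ipZl a x z : ip (a *: x) z = a * ip x z.
Proof. by case: h => hl _ _; rewrite -[a *: x]addr0 hl ip0l addr0. Qed.

Lemma cjD (a b : R[i]) : conjc (a + b) = conjc a + conjc b.
Proof. by case: a => ? ?; case: b => ? ? /=; rewrite opprD. Qed.
Lemma cjM (a b : R[i]) : conjc (a * b) = conjc a * conjc b.
Proof. by case: a => ? ?; case: b => ? ? /=; congr Complex; ring. Qed.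

Lemma ipC x y : ip y x = conjc (ip x y).
Proof. by case: h. Qed.

Lemma ip0r z : ip z 0 = 0.
Proof. by rewrite ipC ip0l conjc0. Qed.

Lemma ipDr x y z : ip z (x + y) = ip z x + ip z y.
Proof. by rewrite [LHS]ipC ipDl cjD -!ipC. Qed.

Lemma ipZr a x z : ip z (a *: x) = conjc a * ip z x.
Proof. by rewrite [LHS]ipC ipZl cjM -ipC. Qed.

Lemma ReD (a b : R[i]) : Re (a + b) = Re a + Re b.
Proof. by case: a => ? ?; case: b. Qed.

Lemma ReJ (w : R[i]) : Re (conjc w) = Re w.
Proof. by case: w. Qed.

Lemma ReMC (a : R) (w : R[i]) : Re ((a%:C)%C * w) = a * Re w.
Proof. by case: w => c d /=; rewrite mul0r subr0. Qed.

Lemma ipxx x : ip x x = ((Re (ip x x))%:C)%C.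
Proof.
have := ipC x x; case: (ip x x) => a b /= [] hb.
by congr Complex; lra.
Qed.

Lemma q_ge0 x : 0 <= Re (ip x x).
Proof.
case: h => _ _ hp; have [->|nx] := eqVneq x 0; first by rewrite ip0l.
by have := hp x nx; rewrite ltcE => /andP[_ /ltW].
Qed.

Lemma q_gt0 x : x != 0 -> 0 < Re (ip x x).
Proof. by case: h => _ _ hp nx; have := hp x nx; rewrite ltcE => /andP[_]. Qed.

Lemma ipxx_neq0 x : x != 0 -> ip x x != 0.
Proof. by move=> nx; case: h => _ _ hp; rewrite gt_eqF ?hp. Qed.

Lemma gsym x y : Re (ip y x) = Re (ip x y).
Proof. by rewrite ipC ReJ. Qed.

Lemma gDl x y z : Re (ip (x + y) z) = Re (ip x z) + Re (ip y z).
Proof. by rewrite ipDl ReD. Qed.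

Lemma gDr x y z : Re (ip z (x + y)) = Re (ip z x) + Re (ip z y).
Proof. by rewrite ipDr ReD. Qed.

Lemma gZl (a : R) x z : Re (ip ((a%:C)%C *: x) z) = a * Re (ip x z).
Proof. by rewrite ipZl ReMC. Qed.

Lemma gZr (a : R) x z : Re (ip z ((a%:C)%C *: x)) = a * Re (ip z x).
Proof. by rewrite ipZr conjc_real ReMC. Qed.

Lemma n_sqr x : ipnorm ip x ^+ 2 = Re (ip x x).
Proof. by rewrite /ipnorm sqr_sqrtr ?q_ge0. Qed.

Lemma n_gt0 x : x != 0 -> 0 < ipnorm ip x.
Proof. by move=> nx; rewrite /ipnorm sqrtr_gt0 q_gt0. Qed.

Lemma CS x y : Re (ip x y) ^+ 2 <= Re (ip x x) * Re (ip y y).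
Proof.
have [->|ny] := eqVneq y 0; first by rewrite ip0r /= expr0n /= ip0l mulr0.
set t := Re (ip x y) / Re (ip y y).
have qy := q_gt0 ny.
have := q_ge0 ((- t)%:C%C *: y + x).
rewrite !(gDl, gDr, gZl, gZr) (gsym x y).
have -> : - t * (- t * Re (ip y y) + Re (ip x y)) + (- t * Re (ip x y) + Re (ip x x)) = Re (ip x x) - Re (ip x y) ^+ 2 / Re (ip y y).
  rewrite /t; field; exact: lt0r_neq0.
by rewrite subr_ge0 ler_pdivrMr.
Qed.

Lemma ipZDl a x y z : ip (a *: x + y) z = a * ip x z + ip y z.
Proof. by case: h. Qed.

Lemma angle_dom x y : x != 0 -> y != 0 ->
  -1 <= Re (ip x y) / (ipnorm ip x * ipnorm ip y) <= 1.
Proof.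
move=> nx ny; have px := n_gt0 nx; have py := n_gt0 ny.
have pxy : 0 < ipnorm ip x * ipnorm ip y by rewrite mulr_gt0.
rewrite -ler_norml normrM normfV (ger0_norm (ltW pxy)) ler_pdivrMr // mul1r.
rewrite /ipnorm -sqrtrM ?q_ge0 // -sqrtr_sqr; apply: ler_wsqrtr.
exact: CS.
Qed.
End Basics.

Lemma divC (R : realType) (a b : R) : ((a%:C)%C / (b%:C)%C) = ((a / b)%:C)%C.
Proof. by rewrite fmorph_div. Qed.

Section Main.
Variables (R : realType) (V : lmodType R[i]) (ip1 ip2 : V -> V -> R[i]).
Hypotheses (h1 : is_inner_product ip1) (h2 : is_inner_product ip2).
Hypothesis P5 : forall x y, ip1 x y = 0 -> ip2 x y = 0.

Definition lam x := ip2 x x / ip1 x x.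

Lemma lamP x y : x != 0 -> ip2 y x = lam x * ip1 y x.
Proof.
move=> nx; have n1 := ipxx_neq0 h1 nx.
set c := ip1 y x / ip1 x x.
have E : ip1 ((- c) *: x + y) x = 0.
  by rewrite (ipZDl h1) /c; field.
have := P5 E; rewrite (ipZDl h2) mulNr => /eqP; rewrite addrC subr_eq0 => /eqP ->.
by rewrite /lam /c; field.
Qed.

Lemma lam_conj x : conjc (lam x) = lam x.
Proof.
rewrite /lam (ipxx h2) (ipxx h1).
by rewrite divC conjc_real.
Qed.

Lemma lam_eq a b : ip1 a b != 0 -> lam a = lam b.
Proof.
move=> nab.
have na : a != 0 by apply: contraNneq nab => ->; rewrite (ip0l h1).
have nb : b != 0 by apply: contraNneq nab => ->; rewrite (ip0r h1).
have E1 := lamP a nb.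
have E2 := lamP b na.
have : lam b * ip1 a b = lam a * ip1 a b.
  by rewrite -E1 (ipC h2) E2 cjM lam_conj -(ipC h1).
by move/(mulIf nab).
Qed.

Lemma lam_const x z : x != 0 -> z != 0 -> lam x = lam z.
Proof.
move=> nx nz; have [e|ne] := eqVneq (ip1 x z) 0; last exact: lam_eq.
have e' : ip1 z x = 0 by rewrite (ipC h1) e conjc0.
rewrite (@lam_eq x (x + z)); last by rewrite (ipDr h1) e addr0 ipxx_neq0.
rewrite (@lam_eq z (x + z)) //.
by rewrite (ipDr h1) e' add0r ipxx_neq0.
Qed.

Lemma ip_prop x0 : x0 != 0 -> forall x y, ip2 x y = lam x0 * ip1 x y.
Proof.
move=> n0 x y; have [->|ny] := eqVneq y 0; first by rewrite (ip0r h1) (ip0r h2) mulr0.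
by rewrite (lamP x ny) (lam_const ny n0).
Qed.
End Main.

Section Red.
Variables (R : realType) (V : lmodType R[i]) (ip1 ip2 : V -> V -> R[i]).
Hypotheses (h1 : is_inner_product ip1) (h2 : is_inner_product ip2).

Definition P4 := forall x y : V, x != 0 -> y != 0 -> Re (ip1 x y) = 0 -> Re (ip2 x y) = 0.

Lemma P4_P5 : P4 -> forall x y, ip1 x y = 0 -> ip2 x y = 0.
Proof.
move=> H x y e.
have [->|nx] := eqVneq x 0; first by rewrite (ip0l h2).
have [->|ny] := eqVneq y 0; first by rewrite (ip0r h2).
have r1 : Re (ip2 x y) = 0 by apply: H => //; rewrite e.
have ny' : ('i%C *: y) != 0.
  by rewrite scaler_eq0 negb_or ny andbT eq_complex /= oner_eq0 andbF.
have r2 : Re (ip2 x ('i%C *: y)) = 0 by apply: H => //; rewrite (ipZr h1) e mulr0.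
move: r2 r1; rewrite (ipZr h2); case: (ip2 x y) => a b /= r2 r1.
apply/eqP; rewrite eq_complex /= r1 eqxx /=; apply/eqP; lra.
Qed.

Lemma pol (ip : V -> V -> R[i]) (h : is_inner_product ip) x y :
  Re (ip x y) = (Re (ip (x + y) (x + y)) - Re (ip x x) - Re (ip y y)) / 2.
Proof. rewrite (gDl h) !(gDr h) (gsym h y x); by field. Qed.

Lemma P2_P4 c : (forall x : V, ipnorm ip2 x = c * ipnorm ip1 x) -> P4.
Proof.
move=> H.
have Q : forall x, Re (ip2 x x) = c ^+ 2 * Re (ip1 x x).
  by move=> x; rewrite -!(n_sqr h2, n_sqr h1) H exprMn.
move=> x y _ _ e; rewrite (pol h2) !Q -mulrBr -mulrBr -mulrA -(pol h1) e.
by rewrite mulr0.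
Qed.

Lemma acos_eq0 (u : R) : -1 <= u <= 1 -> acos u = acos 0 -> u = 0.
Proof.
move=> hu e; rewrite -(@acosK R u) ?in_itv //= e (@acosK R 0) // in_itv /= lerN10 ler01 //.
Qed.

Lemma P3_P4 : (forall x y : V, x != 0 -> y != 0 -> ipangle ip1 x y = ipangle ip2 x y) -> P4.
Proof.
move=> H x y nx ny e; have := H x y nx ny; rewrite /ipangle e mul0r => /esym.
move/(acos_eq0 (angle_dom h2 nx ny))/eqP; rewrite mulf_eq0 invr_eq0.
rewrite mulf_eq0 (gt_eqF (n_gt0 h2 nx)) (gt_eqF (n_gt0 h2 ny)) /= orbF.
by move/eqP.
Qed.

Lemma P6_P4 (th : R) : 0 < th < pi ->
  (forall x y : V, x != 0 -> y != 0 -> ipangle ip1 x y = th -> ipangle ip2 x y = th) -> P4.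
Proof.
move=> thr H x y nx ny e.
have thr' : th \in `[0, pi] by rewrite in_itv /= !ltW //; case/andP: thr.
set k := cos th; set s := sin th.
have s0 : 0 < s := sin_gt0_pi thr.
have s2 : s ^+ 2 = 1 - k ^+ 2 by rewrite /s /k sin2cos2.
set al := ipnorm ip1 x; set be := ipnorm ip1 y.
have al0 : 0 < al := n_gt0 h1 nx.
have be0 : 0 < be := n_gt0 h1 ny.
set a := Re (ip2 x x); set b := Re (ip2 y y); set c := Re (ip2 x y).
have a0 : 0 < a := q_gt0 h2 nx.
have key : forall ee : R, ee ^+ 2 = 1 ->
   (k * be * a + ee * s * al * c) ^+ 2 =
   k ^+ 2 * a * (k ^+ 2 * be ^+ 2 * a + 2 * k * be * ee * s * al * c + ee ^+ 2 * s ^+ 2 * al ^+ 2 * b).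
  move=> ee ee2.
  set v := ((k * be)%:C)%C *: x + ((ee * s * al)%:C)%C *: y.
  have g1xv : Re (ip1 x v) = k * be * al ^+ 2.
    by rewrite /v (gDr h1) !(gZr h1) e mulr0 addr0 (n_sqr h1).
  have q1v : Re (ip1 v v) = (al * be) ^+ 2.
    rewrite /v !(gDl h1, gDr h1, gZl h1, gZr h1) (gsym h1 x y) e.
    rewrite -(n_sqr h1 x) -(n_sqr h1 y) -/al -/be.
    apply/eqP; rewrite -subr_eq0; apply/eqP.
    have -> : k * be * (k * be * al ^+ 2 + ee * s * al * 0) +
      ee * s * al * (k * be * 0 + ee * s * al * be ^+ 2) - (al * be) ^+ 2
      = (al * be) ^+ 2 * (k ^+ 2 + ee ^+ 2 * s ^+ 2 - 1) by ring.
    by rewrite ee2 mul1r s2; ring.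
  have n1v : ipnorm ip1 v = al * be.
    by rewrite /ipnorm q1v sqrtr_sqr ger0_norm // mulr_ge0 // ltW.
  have nv : v != 0.
    apply/negP => /eqP v0; move: q1v; rewrite v0 (ip0l h1) /=.
    by move/eqP; rewrite eq_sym sqrf_eq0 mulf_eq0 !gt_eqF.
  have ang1 : ipangle ip1 x v = th.
    rewrite /ipangle g1xv n1v -/al.
    have -> : k * be * al ^+ 2 / (al * (al * be)) = k.
      by field; rewrite !gt_eqF.
    exact: cosK.
  have := H x v nx nv ang1; rewrite /ipangle => E.
  have Ek : Re (ip2 x v) / (ipnorm ip2 x * ipnorm ip2 v) = k.
    by rewrite /k -E acosK // in_itv /=; apply: angle_dom.
  have Ev : Re (ip2 x v) = k * (ipnorm ip2 x * ipnorm ip2 v).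
    rewrite -Ek mulfVK // mulf_neq0 // gt_eqF // n_gt0 //.
  have E2 : Re (ip2 x v) ^+ 2 = k ^+ 2 * a * Re (ip2 v v).
    by rewrite Ev !exprMn !(n_sqr h2) mulrA.
  have -> : (k * be * a + ee * s * al * c) = Re (ip2 x v).
    by rewrite /v (gDr h2) !(gZr h2).
  rewrite E2; congr (_ * _).
  rewrite /v !(gDl h2, gDr h2, gZl h2, gZr h2) (gsym h2 x y) -/a -/b -/c.
  ring.
have K1 := key 1 (expr1n _ _).
have K2 : (k * be * a + -1 * s * al * c) ^+ 2 = k ^+ 2 * a * (k ^+ 2 * be ^+ 2 * a + 2 * k * be * -1 * s * al * c + (-1) ^+ 2 * s ^+ 2 * al ^+ 2 * b).
  by apply: key; rewrite sqrrN expr1n.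
have D : k * c * (be * a * s * al * s ^+ 2 * 4) = 0.
  have -> : k * c * (be * a * s * al * s ^+ 2 * 4) =
    ((k * be * a + 1 * s * al * c) ^+ 2 - (k * be * a + -1 * s * al * c) ^+ 2) -
    (k ^+ 2 * a * (k ^+ 2 * be ^+ 2 * a + 2 * k * be * 1 * s * al * c + 1 ^+ 2 * s ^+ 2 * al ^+ 2 * b) -
     k ^+ 2 * a * (k ^+ 2 * be ^+ 2 * a + 2 * k * be * -1 * s * al * c + (-1) ^+ 2 * s ^+ 2 * al ^+ 2 * b)).
    rewrite s2; ring.
  by rewrite K1 K2 subrr.
move/eqP: D; rewrite mulf_eq0 => /orP[|]; last first.
  by rewrite !mulf_eq0 !gt_eqF ?expr_gt0 //= pnatr_eq0.
rewrite mulf_eq0 => /orP[/eqP k0|/eqP //].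
move: K1; rewrite k0 !(mul0r, mulr0, expr0n, add0r, addr0) /= mul1r => /eqP.
by rewrite sqrf_eq0 !mulf_eq0 !(gt_eqF s0, gt_eqF al0) /= => /eqP.
Qed.
End Red.

Unset Implicit Arguments. Set Strict Implicit.
Theorem mainTheorem11 (R : realType) (V : lmodType R[i]) (ip1 ip2 : V -> V -> R[i])
  (h1 : is_inner_product ip1) (h2 : is_inner_product ip2) :
  ((exists c : R, 0 < c /\ forall x y : V, ip2 x y = (c%:C)%C * ip1 x y) \/
   (exists c : R, 0 < c /\ forall x : V, ipnorm ip2 x = c * ipnorm ip1 x) \/
   (forall x y : V, x != 0 -> y != 0 -> ipangle ip1 x y = ipangle ip2 x y) \/
   (forall x y : V, x != 0 -> y != 0 ->
      (complex.Re (ip1 x y) = 0 <-> complex.Re (ip2 x y) = 0)) \/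
   (forall x y : V, ip1 x y = 0 <-> ip2 x y = 0) \/
   (exists theta0 : R, 0 < theta0 < pi /\
      forall x y : V, x != 0 -> y != 0 ->
        (ipangle ip1 x y = theta0 <-> ipangle ip2 x y = theta0))) ->
  (exists x : V, x != 0 /\ ipnorm ip1 x = ipnorm ip2 x) ->
  forall x y : V, ip1 x y = ip2 x y.
Proof.
move=> H [x0 [n0 e0]].
have P5 : forall x y, ip1 x y = 0 -> ip2 x y = 0.
  case: H => [[c [_ Hc]] x y e|[[c [_ Hc]]|[H|[H|[H|[th [thr H]]]]]]].
  - by rewrite Hc e mulr0.
  - exact/(P4_P5 h1 h2)/(P2_P4 h1 h2 Hc).
  - exact: (P4_P5 h1 h2 (P3_P4 h2 H)).
  - by apply/(P4_P5 h1 h2) => x y nx ny /(H x y nx ny).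
  - by move=> x y /H.
  - apply/(P4_P5 h1 h2)/(P6_P4 h1 h2 thr) => x y nx ny /(H x y nx ny) //.
have E := ip_prop h1 h2 P5 n0.
have L : lam ip1 ip2 x0 = 1.
  have e0' : Re (ip1 x0 x0) = Re (ip2 x0 x0) by rewrite -(n_sqr h1) -(n_sqr h2) e0.
  by rewrite /lam (ipxx h2) (ipxx h1) e0' divff // -(ipxx h2) ipxx_neq0.
by move=> x y; rewrite E L mul1r.
Qed.
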